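(* Let $G\sim\mathcal{G}(n,p)$ with $n\cdot p\to 0$ as $n\to\infty$. Then the average complexity of best-first branch-and-bound with potentials for maximum independent set on $G$ is subexponential in $n$.
   Context: $\mathcal{G}(n,p)$ is the binomial random graph on $n$ vertices in which each of the $\binom{n}{2}$ pairs of vertices is an edge with probability $p$, independently. The branch-and-bound algorithm processes the vertices in a fixed order $v_1,\dots,v_n$; a node at level $i$ of the binary search tree corresponds to a partial solution $S\subseteq\{v_1,\dots,v_i\}$, with children $S\cup\{v_{i+1}\}$ and $S$, and has potential $u(S)=|S|+n-i$. Nodes whose partial solution is not independent are discarded; the algorithm always expands an unexplored node of largest potential; the first complete solution reached is returned and all other branches pruned. The average complexity is the expected number of nodes handled. *)

(* Defs.v *)
From HB Require Import structures.
From mathcomp Require Import all_boot all_order all_algebra.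
From mathcomp Require Import reals sequences exp.

Set Implicit Arguments.
Unset Strict Implicit.
Unset Printing Implicit Defensive.

Import Order.TTheory GRing.Theory Num.Theory.
Local Open Scope ring_scope.

(* Vertices of G(n,p): 'I_n, processed in the fixed order 0, 1, ..., n-1
   (i.e. v_{k+1} is the ordinal k).  A graph is a set of ordered pairs
   (u,v) with u < v, one per unordered edge {u,v}. *)
Definition pairs (n : nat) : {set 'I_n * 'I_n} :=
  [set e : 'I_n * 'I_n | (val e.1 < val e.2)%N].

Definition adj (n : nat) (E : {set 'I_n * 'I_n}) (u v : 'I_n) : bool :=
  ((u, v) \in E) || ((v, u) \in E).

Definition indep (n : nat) (E : {set 'I_n * 'I_n}) (S : {set 'I_n}) : bool :=
  [forall u in S, forall v in S, ~~ adj E u v].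

(* A node of the search tree at level i with partial solution S
   (S is a subset of {v_1,...,v_i} = ordinals < i). *)
Definition node (n : nat) : Type := (nat * {set 'I_n})%type.

Definition pot (n : nat) (x : node n) : nat := (#|x.2| + n - x.1)%N.

(* The vertex v_{i+1}, as a singleton set (empty if i >= n). *)
Definition vset (n : nat) (i : nat) : {set 'I_n} := [set v : 'I_n | val v == i].

(* A tie-breaking rule: given the list of unexplored (open) nodes, pick one.
   It is valid if, on a nonempty list, it returns an open node of largest
   potential. *)
Definition chooser := forall n : nat, {set 'I_n * 'I_n} -> seq (node n) -> node n.

Definition valid_chooser (ch : chooser) : Prop :=
  forall n (E : {set 'I_n * 'I_n}) (op : seq (node n)), op != [::] ->
    ch n E op \in op /\ forall y, y \in op -> (pot y <= pot (ch n E op))%N.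

(* State: (open nodes, number of nodes handled so far, finished?) *)
Definition bb_state (n : nat) : Type := (seq (node n) * nat * bool)%type.

Definition bb_step (ch : chooser) (n : nat) (E : {set 'I_n * 'I_n})
    (st : bb_state n) : bb_state n :=
  let: (op, c, dn) := st in
  if dn then st else
  if op is [::] then (op, c, true) else
  let x := ch n E op in
  if (n <= x.1)%N then (op, c, true) else
  let kids := [:: (x.1.+1, x.2 :|: vset n x.1); (x.1.+1, x.2)] in
  (rem x op ++ [seq y <- kids | indep E y.2], (c + 2)%N, false).

(* Number of nodes handled (root included).  The search tree has fewer than
   2^(n+1) nodes and every step expands a distinct node, so 2^(n+1) steps
   suffice for the search to terminate. *)
Definition bb_count (ch : chooser) (n : nat) (E : {set 'I_n * 'I_n}) : nat :=
  (iter (2 ^ n.+1) (bb_step ch E) ([:: (0%N, set0)], 1%N, false)).1.2.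

Definition avg_complexity (R : realType) (ch : chooser) (n : nat) (p : R) : R :=
  \sum_(E : {set 'I_n * 'I_n} | E \subset pairs n)
     p ^+ #|E| * (1 - p) ^+ (#|pairs n| - #|E|) * (bb_count ch E)%:R.

(* Main.v *)
Require Import Defs.
From HB Require Import structures.
From mathcomp Require Import all_boot all_order all_algebra.
From mathcomp Require Import reals sequences exp.
From mathcomp Require Import ring lra zify.
Import Order.TTheory GRing.Theory Num.Theory.
Local Open Scope ring_scope.

Definition Bw {R : realType} (x : R) (L k q : nat) : R :=
  if (L <= q)%N then (k.+1)%:R * (1 + x) ^+ k * (x^-1) ^+ (q - L) else 0.

Lemma Bw_ge0 {R : realType} (x : R) L k q : 0 < x -> 0 <= Bw x L k q.
Proof.
move=> x0; rewrite /Bw; case: ifP => // _.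
apply: mulr_ge0; [apply: mulr_ge0|].
- by rewrite ler0n.
- apply: exprn_ge0; lra.
- by apply: exprn_ge0; rewrite invr_ge0 ltW.
Qed.

Lemma Bw_mono {R : realType} (x : R) L k q1 q : 0 < x -> x <= 1 -> (q1 <= q)%N ->
  Bw x L k q1 <= Bw x L k q.
Proof.
move=> x0 x1 hq; rewrite /Bw; case: ifP => h1; last first.
  by case: ifP => // hq2; have := Bw_ge0 x L k q x0; rewrite /Bw hq2.
have -> : (L <= q)%N by apply: leq_trans hq.
apply: ler_wpM2l.
  apply: mulr_ge0; [by rewrite ler0n| apply: exprn_ge0; lra].
apply: ler_weXn2l; first by rewrite invf_ge1.
by rewrite leq_sub2r.
Qed.

Lemma Bw_step {R : realType} (x : R) L k q1 q : 0 < x -> x <= 1 ->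
  (L <= q)%N -> (0 < q)%N -> (q1 <= q)%N ->
  1 + Bw x L k q1 + Bw x L k q.-1 <= Bw x L k.+1 q.
Proof.
move=> x0 x1 hLq hq hq1.
set A := (1 + x) ^+ k; set Z := (x^-1) ^+ (q - L).
have hA : 1 <= A by apply: exprn_ege1; lra.
have hZ : 1 <= Z by apply: exprn_ege1; rewrite invf_ge1.
have e1 : Bw x L k q1 <= (k.+1)%:R * A * Z.
  by have := Bw_mono x L k q1 q x0 x1 hq1; rewrite {2}/Bw hLq.
have e2 : Bw x L k q.-1 <= (k.+1)%:R * A * Z * x.
  rewrite /Bw; case: ifP => h.
    rewrite /Z.
    have -> : (q - L = (q.-1 - L).+1)%N by lia.
    rewrite le_eqVlt; apply/orP; left; apply/eqP.
    rewrite exprS /A; field; exact: lt0r_neq0.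
  apply: mulr_ge0; last lra.
  apply: mulr_ge0; [apply: mulr_ge0; first by rewrite ler0n|]; lra.
have -> : Bw x L k.+1 q = (k.+2)%:R * (A * (1 + x)) * Z.
  by rewrite /Bw hLq exprSr.
have hk : 0 <= (k.+1)%:R :> R by rewrite ler0n.
have hAZ : 1 <= A * Z by rewrite -(mulr1 1); apply: ler_pM => //; lra.
rewrite -addn1 natrD.
nra.
Qed.
Definition Idx n (E : {set 'I_n * 'I_n}) : {set 'I_n} :=
  [set v | [forall u, (v, u) \notin E]].
Arguments Idx {n}.

Definition goodn n (E : {set 'I_n * 'I_n}) (i : nat) : node n :=
  (i, [set v in Idx E | (val v < i)%N]).
Arguments goodn {n}.

Lemma indep_sub n (E : {set 'I_n * 'I_n}) (S : {set 'I_n}) : S \subset Idx E -> indep E S.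
Proof.
move=> /subsetP hS; apply/forall_inP => u uS; apply/forall_inP => v vS.
have := hS u uS; have := hS v vS; rewrite !inE => /forallP hv /forallP hu.
by rewrite /adj negb_or hu hv.
Qed.

Lemma card_vset n i : (#|vset n i| <= 1)%N.
Proof.
apply/card_le1_eqP => a b; rewrite !inE => /eqP ha /eqP hb.
by apply: val_inj; rewrite ha hb.
Qed.

Lemma card_Idx n (E : {set 'I_n * 'I_n}) : (n - #|Idx E| <= #|E|)%N.
Proof.
have h : ~: Idx E \subset [set e.1 | e in E].
  apply/subsetP => v; rewrite !inE => /forallPn [u]; rewrite negbK => hu.
  by apply/imsetP; exists (v, u).
have h2 := leq_trans (subset_leq_card h) (leq_imset_card _ _).
have := cardsC (Idx E); rewrite card_ord => hC; rewrite -[X in (X - _)%N]hC addKn; exact: h2.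
Qed.

Lemma pot_good n (E : {set 'I_n * 'I_n}) i : (i <= n)%N -> (#|Idx E| <= pot (goodn E i))%N.
Proof.
move=> hi; rewrite /pot /=.
have [j hj] : exists j, n = (i + j)%N by exists (n - i)%N; lia.
elim: j i hi hj => [|j IH] i hi hj.
  have -> : [set v in Idx E | (val v < i)%N] = Idx E.
    rewrite addn0 in hj; subst i.
    by apply/setP => v; rewrite !inE ltn_ord andbT.
  lia.
have := IH i.+1 ltac:(lia) ltac:(lia).
have : (#|[set v in Idx E | (val v < i.+1)%N]| <= #|[set v in Idx E | (val v < i)%N]| + 1)%N.
  apply: (leq_trans _ (leq_add (leqnn _) (card_vset n i))).
  apply: (leq_trans _ (leq_card_setU _ _)).
  apply: subset_leq_card; apply/subsetP => v; rewrite !inE ltnS leq_eqVlt.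
  by case/andP=> -> /orP [->|->]; rewrite ?orbT.
set a := #|Idx E|; set b := #|[set v in Idx E | (val v < i.+1)%N]|.
set c := #|[set v in Idx E | (val v < i)%N]|; clearbody a b c; lia.
Qed.

Lemma good_child n (E : {set 'I_n * 'I_n}) i : (i < n)%N ->
  goodn E i.+1 \in [seq y <- [:: (i.+1, (goodn E i).2 :|: vset n i); (i.+1, (goodn E i).2)]
                   | indep E y.2].
Proof.
move=> hi; rewrite mem_filter; apply/andP; split.
  by apply: indep_sub; apply/subsetP => v; rewrite inE => /andP[].
rewrite !inE /goodn /=.
case hI: (Ordinal hi \in Idx E); rewrite /Idx inE in hI.
- apply/orP; left; apply/eqP; congr pair; apply/setP => v; rewrite !inE ltnS leq_eqVlt.
  case: (eqVneq (val v) i) => [hv|hv] /=; last by rewrite orbF.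
  have -> : v = Ordinal hi by apply: val_inj.
  by rewrite hI ?orbT.
- apply/orP; right; apply/eqP; congr pair; apply/setP => v; rewrite !inE ltnS leq_eqVlt.
  case: (eqVneq (val v) i) => [hv|hv] //=.
  have -> : v = Ordinal hi by apply: val_inj.
  by rewrite hI ?orbT.
Qed.

Definition Phi {R : realType} (x : R) (L : nat) {n : nat} (op : seq (node n)) : R :=
  \sum_(y <- op) Bw x L (n - y.1) (pot y).

Definition Inv {R : realType} (x : R) {n} (E : {set 'I_n * 'I_n}) (st : bb_state n) : Prop :=
  let: (op, c, dn) := st in
  c%:R + 2 * Phi x #|Idx E| op <= 1 + 2 * Bw x #|Idx E| n n /\
  (~~ dn -> exists i, (i <= n)%N /\ goodn E i \in op).

Lemma Phi_ge0 {R : realType} (x : R) L n (op : seq (node n)) : 0 < x -> 0 <= Phi x L op.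
Proof. by move=> x0; apply: sumr_ge0 => y _; apply: Bw_ge0. Qed.

Lemma inv_step {R : realType} (x : R) (ch : chooser) (hch : valid_chooser ch)
   n (E : {set 'I_n * 'I_n}) st : 0 < x -> x <= 1 ->
  Inv x E st -> Inv x E (bb_step ch E st).
Proof.
move=> x0 x1; case: st => [[op c] dn]; rewrite /bb_step.
case: dn => //.
case: op => [|y0 op'] /=; first by case=> h1 _; split.
set op := y0 :: op'.
case=> h1 [//| i [hi hg]].
have [hx hmax] := hch n E op isT.
set x' := ch n E op.
case: ifP => hn; first by split.
split; last first.
  move=> _.
  case: (eqVneq (goodn E i) x') => [heq|hne].
    exists i.+1; split.
      by move: hn; rewrite -heq /= => /negbT; rewrite -ltnNge.
    rewrite mem_cat; apply/orP; right.
    have hin : (i < n)%N by move: hn; rewrite -heq /= => /negbT; rewrite -ltnNge.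
    by have := @good_child n E i hin; rewrite -heq.
  by exists i; split => //; rewrite mem_cat (rem_mem hne hg).
have hxn : (x'.1 < n)%N by rewrite ltnNge hn.
set L := #|Idx E|.
set S := x'.2.
set k1 : node n := (x'.1.+1, S :|: vset n x'.1).
set k2 : node n := (x'.1.+1, S).
set w := fun y : node n => Bw x L (n - y.1) (pot y).
have hLx : (L <= pot x')%N.
  exact: (leq_trans (@pot_good n E i hi) (hmax _ hg)).
have hq0 : (0 < pot x')%N by rewrite /pot; lia.
have hk1 : (pot k1 <= pot x')%N.
  rewrite /pot /k1 /=.
  have := leq_trans (leq_card_setU S (vset n x'.1)) (leq_add (leqnn _) (card_vset n x'.1)).
  set a := #|S :|: vset n x'.1|; set b := #|S|; clearbody a b; lia.
have hk2 : pot k2 = (pot x').-1 by rewrite /pot /k2 /=; set b := #|S|; clearbody b; lia.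
have hst := Bw_step x L (n - x'.1.+1) (pot k1) (pot x') x0 x1 hLx hq0 hk1.
have hw : 1 + w k1 + w k2 <= w x'.
  rewrite /w /= hk2.
  have -> : (n - x'.1 = (n - x'.1.+1).+1)%N by lia.
  exact: hst.
have hfilt : Phi x L [seq y <- [:: k1; k2] | indep E y.2] <= w k1 + w k2.
  rewrite /Phi /=.
  have g1 := Bw_ge0 x L (n - k1.1) (pot k1) x0.
  have g2 := Bw_ge0 x L (n - k2.1) (pot k2) x0.
  rewrite /w.
  case: (indep E (S :|: vset n x'.1)); case: (indep E S); rewrite ?big_cons ?big_nil /=; lra.
have hop : Phi x L op = w x' + Phi x L (rem x' op).
  by rewrite /Phi (big_rem x' hx).
rewrite /Phi big_cat /= -/(Phi x L (rem x' op)) -/(Phi x L _) -/L.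
rewrite -/L in h1.
rewrite hop in h1.
rewrite -addn2 natrD.
lra.
Qed.

Lemma bb_count_bound {R : realType} (x : R) (ch : chooser) (hch : valid_chooser ch)
   n (E : {set 'I_n * 'I_n}) : 0 < x -> x <= 1 ->
  (bb_count ch E)%:R <= 1 + 2 * ((n.+1)%:R * (1 + x) ^+ n * (x^-1) ^+ #|E|).
Proof.
move=> x0 x1.
have hinv : forall k, Inv x E (iter k (bb_step ch E) ([:: (0%N, set0)], 1%N, false)).
  elim=> [|k IH]; last by rewrite iterS; apply: inv_step.
  rewrite /= /Phi big_cons big_nil /pot /= cards0 addr0 subn0; split; first lra.
  move=> _; exists 0%N; split => //.
  rewrite inE; apply/eqP; congr pair; apply/setP => v; rewrite !inE.
  by rewrite ltn0 andbF.
rewrite /bb_count.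
move: (hinv (2 ^ n.+1)%N).
case: (iter _ _ _) => [[op c] dn] [h1 _] /=.
have hP := @Phi_ge0 R x #|Idx E| n op x0.
have hB : Bw x #|Idx E| n n <= (n.+1)%:R * (1 + x) ^+ n * (x^-1) ^+ #|E|.
  rewrite /Bw.
  have -> : (#|Idx E| <= n)%N by have := max_card (Idx E); rewrite card_ord.
  apply: ler_wpM2l.
    apply: mulr_ge0; [by rewrite ler0n| apply: exprn_ge0; lra].
  apply: ler_weXn2l; first by rewrite invf_ge1.
  exact: card_Idx.
lra.
Qed.
Lemma sum_subsets (R : comPzRingType) (T : finType) (P : {set T}) (f : nat -> R) :
  \sum_(E : {set T} | E \subset P) f #|E| =
  \sum_(k < #|P|.+1) f k *+ 'C(#|P|, k).
Proof.
rewrite (partition_big (fun E : {set T} => (inord #|E| : 'I_(#|P|.+1))) xpredT) //=.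
apply: eq_bigr => k _.
rewrite (eq_bigl (fun E => E \in [set A : {set T} | (A \subset P) && (#|A| == k)])); last first.
  move=> E; rewrite inE; case sEP: (E \subset P) => //=.
  have hE : (#|E| < #|P|.+1)%N by rewrite ltnS subset_leq_card.
  apply/eqP/eqP => [h|h].
    by rewrite -h inordK.
  by apply: val_inj; rewrite /= inordK.
rewrite (eq_bigr (fun _ => f k)); last by move=> E; rewrite inE => /andP[_ /eqP ->].
by rewrite sumr_const cards_draws.
Qed.

Lemma wsum (R : comPzRingType) (T : finType) (P : {set T}) (p a b y : R) :
  \sum_(E : {set T} | E \subset P)
     p ^+ #|E| * (1 - p) ^+ (#|P| - #|E|) * (a + b * y ^+ #|E|) =
  a * (1 - p + p) ^+ #|P| + b * (1 - p + p * y) ^+ #|P|.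
Proof.
rewrite (@sum_subsets _ _ _ (fun k => p ^+ k * (1 - p) ^+ (#|P| - k) * (a + b * y ^+ k))).
rewrite !exprDn !mulr_sumr -big_split /=.
apply: eq_bigr => i _.
rewrite !mulrnAr -mulrnDl; congr (_ *+ _).
rewrite exprMn; ring.
Qed.

Lemma pow_le {R : realType} (a b : R) n : 0 <= a -> a <= b -> a ^+ n <= b ^+ n.
Proof. by move=> ha hab; apply: lerXn2r; rewrite // nnegrE //; apply: le_trans hab. Qed.

Lemma growth {R : realType} (eps : R) : 0 < eps ->
  exists N, forall n, (N <= n)%N -> (2 * n + 3)%:R <= expR (eps * n%:R / 2).
Proof.
move=> e0.
have hb : 0 <= 40 / (eps * eps) by apply: divr_ge0 => //; nra.
exists (Num.Def.archi_bound (40 / (eps * eps))).+1 => n hn.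
have hn1 : (Num.Def.archi_bound (40 / (eps * eps)))%:R <= n%:R :> R.
  by rewrite ler_nat; apply: ltnW.
have h40 := archi_boundP hb.
have hn' : 40 / (eps * eps) <= n%:R by lra.
have hn40 : 40 <= eps * eps * n%:R.
  have := ler_wpM2l (ltW (mulr_gt0 e0 e0)) hn'.
  by rewrite mulrCA mulfV ?mulr1 // gt_eqF // mulr_gt0.
have hn0 : 1 <= n%:R :> R by rewrite ler1n; apply: leq_trans hn.
set u := eps * n%:R / 2.
have hu : 0 <= u by rewrite /u; apply: divr_ge0 => //; apply: mulr_ge0; [lra | rewrite ler0n].
have := expR_ge1Dxn 1 hu.
rewrite /u natrD natrM /= => h.
apply: le_trans h.
rewrite expr2.
have -> : (eps * n%:R / 2 * (eps * n%:R / 2)) / 2 = (eps * eps * n%:R) * n%:R / 8 by field.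
nra.
Qed.

Lemma aux_nat n : (2 * n + 3 = 2 * n.+1 + 1)%N.
Proof. lia. Qed.

Theorem theorem3 (R : realType) (p : nat -> R) (ch : chooser)
    (hch : valid_chooser ch)
    (hp : forall n, 0 <= p n <= 1)
    (hnp : forall d : R, 0 < d ->
       exists N, forall n, (N <= n)%N -> n%:R * p n <= d) :
  forall eps : R, 0 < eps ->
    exists N, forall n, (N <= n)%N ->
      avg_complexity ch n (p n) <= expR (eps * n%:R).
Proof.
move=> eps e0.
set x := eps / (eps + 4).
have x0 : 0 < x by rewrite /x; apply: divr_gt0 => //; lra.
have x1 : x <= 1 by rewrite /x ler_pdivrMr; lra.
have x4 : x <= eps / 4.
  rewrite /x ler_pdivrMr; last lra.
  rewrite mulrDr.
  have : 0 <= eps / 4 * eps by apply: mulr_ge0; lra.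
  lra.
set d := x * eps / 4.
have d0 : 0 < d by rewrite /d; apply: divr_gt0 => //; apply: mulr_gt0.
have [N1 hN1] := hnp d d0.
have [N2 hN2] := growth _ e0.
exists (maxn N1 N2) => n hn.
have hd := hN1 n (leq_trans (leq_maxl _ _) hn).
have hg := hN2 n (leq_trans (leq_maxr _ _) hn).
have [p0 p1] := andP (hp n).
set q := p n in hd p0 p1 *.
set y := x^-1.
have y1 : 1 <= y by rewrite /y invf_ge1.
set A := 2 * ((n.+1)%:R * (1 + x) ^+ n).
have A0 : 0 <= A.
  rewrite /A; apply: mulr_ge0 => //; apply: mulr_ge0; [by rewrite ler0n| apply: exprn_ge0; lra].
rewrite /avg_complexity.
apply: (@le_trans _ _ (\sum_(E : {set 'I_n * 'I_n} | E \subset pairs n)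
     q ^+ #|E| * (1 - q) ^+ (#|pairs n| - #|E|) * (1 + A * y ^+ #|E|))).
  apply: ler_sum => E _.
  apply: ler_wpM2l.
    by apply: mulr_ge0; apply: exprn_ge0; lra.
  have := bb_count_bound x ch hch n E x0 x1.
  by rewrite /A !mulrA.
rewrite wsum mul1r subrK expr1n.
set K := #|pairs n|.
have hK : (K <= n * n)%N.
  rewrite /K; have := max_card (pairs n); by rewrite card_prod card_ord.
have e1 : (1 - q + q * y) ^+ K <= expR (q * y) ^+ K.
  have hqy : 0 <= q * y by apply: mulr_ge0; lra.
  apply: pow_le; first lra.
  have := expR_ge1Dx (q * y); lra.
have e2 : expR (q * y) ^+ K <= expR (eps * n%:R / 4).
  rewrite -expRM_natl ler_expR.
  apply: (@le_trans _ _ ((n * n)%:R * (q * y))).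
    apply: ler_wpM2r; first by apply: mulr_ge0; lra.
    by rewrite ler_nat.
  rewrite natrM.
  have hdy : d * y = eps / 4 by rewrite /d /y; field; lra.
  have hy0 : 0 <= y by lra.
  have hn0 : 0 <= n%:R :> R by rewrite ler0n.
  have : n%:R * q * y <= d * y by apply: ler_wpM2r.
  rewrite hdy => h.
  have := ler_wpM2l hn0 h.
  have -> : n%:R * n%:R * (q * y) = n%:R * (n%:R * q * y) by ring.
  by have -> : eps * n%:R / 4 = n%:R * (eps / 4) by ring.
have e3 : (1 + x) ^+ n <= expR (eps * n%:R / 4).
  apply: (@le_trans _ _ (expR x ^+ n)).
    by apply: pow_le; [lra | apply: expR_ge1Dx].
  rewrite -expRM_natl ler_expR.
  have hn0 : 0 <= n%:R :> R by rewrite ler0n.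
  have := ler_wpM2l hn0 x4.
  by have -> : eps * n%:R / 4 = n%:R * (eps / 4) by ring.
have hE := expR_gt0 (eps * n%:R / 4).
have hE2 : expR (eps * n%:R) = expR (eps * n%:R / 2) * expR (eps * n%:R / 2).
  by rewrite -expRD; congr expR; field.
have hE3 : expR (eps * n%:R / 2) = expR (eps * n%:R / 4) * expR (eps * n%:R / 4).
  by rewrite -expRD; congr expR; field.
have hEg1 : 1 <= expR (eps * n%:R / 2).
  have := expR_ge1Dx (eps * n%:R / 2).
  have : 0 <= eps * n%:R / 2 by apply: divr_ge0 => //; apply: mulr_ge0; [lra|rewrite ler0n].
  lra.
rewrite hE2.
have hpow := e1; have hq0 : 0 <= (1 - q + q * y) ^+ K.
  have hqy : 0 <= q * y by apply: mulr_ge0; lra.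
  apply: exprn_ge0; lra.
have hA : A * (1 - q + q * y) ^+ K <= 2 * (n.+1)%:R * expR (eps * n%:R / 2).
  rewrite /A hE3.
  have hn1 : 0 <= (n.+1)%:R :> R by rewrite ler0n.
  have hx0 : 0 <= (1 + x) ^+ n by apply: exprn_ge0; lra.
  have h4 : (1 - q + q * y) ^+ K <= expR (eps * n%:R / 4) by apply: le_trans e1 e2.
  have h5 : (1 + x) ^+ n * (1 - q + q * y) ^+ K <=
            expR (eps * n%:R / 4) * expR (eps * n%:R / 4) by apply: ler_pM.
  have := ler_wpM2l (mulr_ge0 (ler0n R 2) hn1) h5.
  by rewrite !mulrA.
set E2 := expR (eps * n%:R / 2) in hg hA hEg1 *.
apply: (@le_trans _ _ (1 + 2 * (n.+1)%:R * E2)); first by rewrite lerD2l.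
have hE20 : 0 <= E2 := le_trans ler01 hEg1.
have h := ler_wpM2r hE20 hg.
have e5 : (2 * n + 3)%:R * E2 = 2 * (n.+1)%:R * E2 + E2.
  have -> : (2 * n + 3)%:R = (2 * n.+1 + 1)%:R :> R by rewrite aux_nat.
  rewrite natrD natrM; ring.
rewrite e5 in h.
apply: le_trans h; rewrite addrC lerD2l; exact: hEg1.
Qed.
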